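(* In the model described in the context, suppose $\triangle C>0$, and let $Q$ be the set of symmetric forward-market equilibria. Let $\zeta_1=(M+1)\triangle C+\min\big(MN\triangle C,\ MNk+2M\sqrt{Nk\triangle C}\big)$. Then there exists $(f,x)\in Q$ with $y_j(f\mathbf1,x\mathbf1)=0$ if and only if $\alpha_x\le\zeta_1$. Furthermore, if $\alpha_x>(M+1)\triangle C$, then there is $\bar f$ such that, for $(f,x)\in Q$, $y_j(f\mathbf1,x\mathbf1)=0$ if and only if \[(f,x)\in S:=\Big\{(f,x)\in\mathbb{R}\times\mathbb{R}_+:\ x=\tfrac1M(\alpha_x-(\triangle C-f)),\ 0\le f\le\bar f\Big\},\] and $S\subseteq Q$; moreover $\bar f>0$ if $\alpha_x<\zeta_1$.
   Context: Model: $M\ge1$ leaders and $N\ge2$ followers; inverse demand $P(q)=\alpha-\beta q$, $\alpha,\beta>0$; leader marginal cost $C$, follower marginal cost $c$, $c\ge C>0$; follower capacity $k>0$. Leader $i$ produces $x_i\ge0$; follower $j$ takes forward position $f_j\in\mathbb{R}$ and spot production $y_j\in[0,k]$. Given $\mathbf f,\mathbf x$, the spot market is the game among followers where follower $j$ chooses $y_j\in[0,k]$ to maximize $P(\sum_ix_i+\sum_{j'}y_{j'})(y_j-f_j)-cy_j$; its unique Nash equilibrium is $\mathbf y(\mathbf f,\mathbf x)=(y_1(\mathbf f,\mathbf x),\dots,y_N(\mathbf f,\mathbf x))$. Follower $j$'s forward payoff is $(P(\sum_ix_i+\sum_{j'}y_{j'}(\mathbf f,\mathbf x))-c)y_j(\mathbf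 f,\mathbf x)$, maximized over $f_j\in\mathbb{R}$; leader $i$'s payoff is $(P(\sum_ix_i+\sum_{j'}y_{j'}(\mathbf f,\mathbf x))-C)x_i$, maximized over $x_i\in\mathbb{R}_+$. A Nash equilibrium of the forward market is $(\mathbf f,\mathbf x)$ where no leader or follower can strictly gain by a unilateral deviation. $Q=\{(f,x)\in\mathbb{R}\times\mathbb{R}_+:(f\mathbf1,x\mathbf1)\text{ is a Nash equilibrium}\}$. $\alpha_x=(\alpha-C)/\beta$, $\triangle C=(c-C)/\beta$. *)

(* Defs.v *)
From HB Require Import structures.
From mathcomp Require Import all_boot all_order all_algebra.
From mathcomp Require Import reals.
From Stdlib Require Import ClassicalEpsilon.
Set Implicit Arguments. Unset Strict Implicit. Unset Printing Implicit Defensive.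
Import Order.TTheory GRing.Theory Num.Theory.
Local Open Scope ring_scope.

Section Model.
Variable R : realType.
Variables (M N : nat) (alpha beta C c k : R).

Definition price (q : R) : R := alpha - beta * q.

Definition upd (n : nat) (v : 'I_n -> R) (j : 'I_n) (z : R) : 'I_n -> R :=
  fun j' => if j' == j then z else v j'.

Definition total (x : 'I_M -> R) (y : 'I_N -> R) : R :=
  \sum_(i < M) x i + \sum_(j < N) y j.

Definition spot_payoff (f : 'I_N -> R) (x : 'I_M -> R) (y : 'I_N -> R) (j : 'I_N) : R :=
  price (total x y) * (y j - f j) - c * y j.

Definition spot_NE (f : 'I_N -> R) (x : 'I_M -> R) (y : 'I_N -> R) : Prop :=
  (forall j, 0 <= y j <= k) /\
  (forall j z, 0 <= z <= k -> spot_payoff f x (upd y j z) j <= spot_payoff f x y j).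

(* y(f,x): the (unique) spot-market Nash equilibrium, selected by choice *)
Definition yspot (f : 'I_N -> R) (x : 'I_M -> R) : 'I_N -> R :=
  epsilon (inhabits (fun _ : 'I_N => (0 : R))) (spot_NE f x).

Definition follower_payoff (f : 'I_N -> R) (x : 'I_M -> R) (j : 'I_N) : R :=
  (price (total x (yspot f x)) - c) * yspot f x j.

Definition leader_payoff (f : 'I_N -> R) (x : 'I_M -> R) (i : 'I_M) : R :=
  (price (total x (yspot f x)) - C) * x i.

Definition forward_NE (f : 'I_N -> R) (x : 'I_M -> R) : Prop :=
  (forall i, 0 <= x i) /\
  (forall j (g : R), follower_payoff (upd f j g) x j <= follower_payoff f x j) /\
  (forall i (z : R), 0 <= z -> leader_payoff f (upd x i z) i <= leader_payoff f x i).

Definition inQ (f x : R) : Prop :=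
  0 <= x /\ forward_NE (fun _ => f) (fun _ => x).

Definition alpha_x : R := (alpha - C) / beta.
Definition dC : R := (c - C) / beta.

Definition zeta1 : R :=
  (M%:R + 1) * dC +
  Num.min (M%:R * N%:R * dC)
          (M%:R * N%:R * k + 2 * M%:R * Num.sqrt (N%:R * k * dC)).

End Model.

(* Main.v *)
Require Import Defs.
From HB Require Import structures.
From mathcomp Require Import all_boot all_order all_algebra.
From mathcomp Require Import reals.
From mathcomp Require Import ring lra.
From Stdlib Require Import ClassicalEpsilon.
Import Order.TTheory GRing.Theory Num.Theory.
Local Open Scope ring_scope.
Set Implicit Arguments. Unset Strict Implicit. Unset Printing Implicit Defensive.

Lemma sum_constR (R : realType) n (w:R) : \sum_(i < n) w = n%:R * w.
Proof. by rewrite sumr_const card_ord mulr_natl. Qed.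

Lemma sum_upd (R : realType) n (v : 'I_n -> R) j z :
  \sum_i upd v j z i = \sum_i v i - v j + z.
Proof.
rewrite (bigD1 j) //= [in RHS](bigD1 j) //= /upd eqxx.
have -> : \sum_(i < n | i != j) (if i == j then z else v i) = \sum_(i < n | i != j) v i.
  by apply: eq_bigr => i /negbTE ->.
lra.
Qed.

Section Game.
Variable R : realType.
Variables (M N : nat) (alpha beta C c k : R).
Hypothesis hb : 0 < beta.
Hypothesis hk : 0 < k.

Local Notation a := (alpha_x alpha beta C).
Local Notation d := (dC beta C c).

Lemma ea : alpha = beta * a + C.
Proof. rewrite /alpha_x; field; exact: lt0r_neq0. Qed.
Lemma ec : c = beta * d + C.
Proof. rewrite /dC; field; exact: lt0r_neq0. Qed.

Definition G (f : 'I_N -> R) (x : 'I_M -> R) (y : 'I_N -> R) j :=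
  beta * (a - d - (\sum_i x i + \sum_i y i) - y j + f j).

Lemma payoff_diff f x y j z :
  spot_payoff alpha beta c f x (upd y j z) j - spot_payoff alpha beta c f x y j
  = (z - y j) * G f x y j - beta * (z - y j)^+2.
Proof.
rewrite /spot_payoff /Defs.total /price sum_upd /G /upd eqxx.
have ea' := ea; have ec' := ec.
set A := alpha_x alpha beta C in ea' *; set D := dC beta C c in ec' *.
rewrite ea' ec'; ring.
Qed.

Lemma NE_suff (f : 'I_N -> R) (x : 'I_M -> R) (y : 'I_N -> R) :
  (forall j, 0 <= y j <= k) ->
  (forall j z, 0 <= z <= k -> (z - y j) * G f x y j <= 0) ->
  spot_NE alpha beta c k f x y.
Proof.
move=> h1 h2; split => // j z hz.
have := payoff_diff f x y j z; have := h2 j z hz.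
have : 0 <= beta * (z - y j)^+2 by apply: mulr_ge0; [exact: ltW| exact: sqr_ge0].
move=> h3 h4 h5; lra.
Qed.

Lemma NE_VI (f : 'I_N -> R) (x : 'I_M -> R) (y : 'I_N -> R) : spot_NE alpha beta c k f x y ->
  forall j z, 0 <= z <= k -> (z - y j) * G f x y j <= 0.
Proof.
move=> [hy hne] j z /andP[z0 zk].
rewrite leNgt; apply/negP => hA.
set A := (z - y j) * G f x y j in hA.
set D := (z - y j)^+2.
have hD : 0 < D.
  rewrite /D lt0r sqr_ge0 andbT sqrf_eq0; apply/negP => /eqP h0.
  by move: hA; rewrite /A h0 mul0r ltxx.
set t := Num.min 1 (A / (2 * beta * D)).
have t1 : t <= 1 by rewrite /t ge_min lexx.
have t2 : t <= A / (2 * beta * D) by rewrite /t ge_min lexx orbT.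
have hbD : 0 < 2 * beta * D by apply: mulr_gt0 => //; apply: mulr_gt0 => //.
have t0 : 0 < t by rewrite /t lt_min ltr01 /= divr_gt0.
have t2' : t * (2 * beta * D) <= A.
  by rewrite -ler_pdivlMr.
have /andP[y0 yk] := hy j.
have hz' : 0 <= y j + t * (z - y j) <= k by apply/andP; split; nra.
have := hne j _ hz'.
have := payoff_diff f x y j (y j + t * (z - y j)).
have -> : y j + t * (z - y j) - y j = t * (z - y j) by ring.
move=> e1 h; have : t * A - beta * (t^+2 * D) <= 0.
  have -> : t * A - beta * (t^+2 * D) = t * (z - y j) * G f x y j - beta * (t * (z - y j)) ^+ 2.
    by rewrite /A /D; ring.
  lra.
move=> h3.
have : t * (A - beta * t * D) <= 0.
  have -> : t * (A - beta * t * D) = t * A - beta * (t^+2 * D) by ring.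
  exact: h3.
rewrite pmulr_rle0 // => h4.
nra.
Qed.

Lemma NE_unique (f : 'I_N -> R) (x : 'I_M -> R) (y y' : 'I_N -> R) : spot_NE alpha beta c k f x y -> spot_NE alpha beta c k f x y' ->
  forall j, y j = y' j.
Proof.
move=> H H' j.
set del := fun i => y i - y' i.
have key : forall i, del i * (\sum_l del l) + del i ^+ 2 <= 0.
  move=> i.
  have := NE_VI H i (proj1 H' i); have := NE_VI H' i (proj1 H i).
  rewrite /G /del sumrB.
  move=> h1 h2.
  have E : beta * ((y i - y' i) * (\sum_i0 y i0 - \sum_i0 y' i0) + (y i - y' i) ^+ 2) =
      (y i - y' i) * (beta * (a - d - (\sum_i0 x i0 + \sum_i0 y' i0) - y' i + f i)) +
      (y' i - y i) * (beta * (a - d - (\sum_i0 x i0 + \sum_i0 y i0) - y i + f i)) by ring.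
  have : beta * ((y i - y' i) * (\sum_i0 y i0 - \sum_i0 y' i0) + (y i - y' i) ^+ 2) <= 0.
    rewrite E; lra.
  by rewrite pmulr_rle0.
have hsum : \sum_i (del i * (\sum_l del l) + del i ^+ 2) <= 0.
  have : \sum_i (del i * (\sum_l del l) + del i ^+ 2) <= \sum_(i < N) (0:R).
    by apply: ler_sum => i _; exact: key.
  by rewrite big1_eq.
rewrite big_split /= -mulr_suml [X in _ + X](bigD1 j) //= in hsum.
have h0 : 0 <= \sum_(i < N | i != j) del i ^+ 2 by apply: sumr_ge0 => i _; exact: sqr_ge0.
have h1 : 0 <= (\sum_l del l) * (\sum_l del l) by rewrite -expr2 sqr_ge0.
have : del j ^+ 2 <= 0 by lra.
rewrite /del => h2; have : (y j - y' j) ^+ 2 = 0 by apply/eqP; rewrite eq_le h2 sqr_ge0.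
by move/eqP; rewrite sqrf_eq0 subr_eq0 => /eqP.
Qed.

Lemma yspot_eq (f : 'I_N -> R) (x : 'I_M -> R) (y : 'I_N -> R) : spot_NE alpha beta c k f x y ->
  forall j, yspot alpha beta c k f x j = y j.
Proof.
move=> H j.
have H0 : spot_NE alpha beta c k f x (yspot alpha beta c k f x).
  by rewrite /yspot; apply: epsilon_spec; exists y.
exact: NE_unique H0 H j.
Qed.

End Game.


Section Clamp.
Variable R : realType.
Variable k : R.
Hypothesis hk : 0 < k.
Definition clamp (v : R) := if v <= 0 then 0 else if v <= k then v else k.
Lemma clamp_range v : 0 <= clamp v <= k.
Proof. rewrite /clamp; case: (leP v 0) => h1; [|case: (leP v k) => h2]; apply/andP; split. all: try lra. all: exact: ltW. Qed.
Lemma clamp_prop v z : 0 <= z <= k -> (z - clamp v) * (v - clamp v) <= 0.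
Proof.
move=> /andP[z0 zk]; rewrite /clamp; case: (leP v 0) => h1; [|case: (leP v k) => h2].
- rewrite !subr0; nra.
- rewrite subrr mulr0 //.
- nra.
Qed.
Lemma clamp0 v : v <= 0 -> clamp v = 0.
Proof. by rewrite /clamp => ->. Qed.
Lemma clamp_pos v : 0 < v -> 0 < clamp v.
Proof. rewrite /clamp => h; case: (leP v 0) => h1; [lra|case: (leP v k) => h2 //; lra]. Qed.
Lemma clamp_id v : 0 < v <= k -> clamp v = v.
Proof. move=> /andP[h1 h2]; rewrite /clamp; case: (leP v 0) => h3; [lra|by rewrite h2]. Qed.
Lemma clamp_le v : 0 <= v -> clamp v <= v.
Proof. rewrite /clamp => h; case: (leP v 0) => h1; [lra|case: (leP v k) => h2 //; lra]. Qed.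
Lemma clamp_lek v : clamp v <= k.
Proof. by have /andP[] := clamp_range v. Qed.
Lemma clamp_ge0 v : 0 <= clamp v.
Proof. by have /andP[] := clamp_range v. Qed.
End Clamp.

Section Game2.
Variable R : realType.
Variables (M N : nat) (alpha beta C c k : R).
Hypothesis hb : 0 < beta.
Hypothesis hk : 0 < k.

Local Notation a := (alpha_x alpha beta C).
Local Notation d := (dC beta C c).
Local Notation Mr := (M%:R : R).
Local Notation Nr := (N%:R : R).
Local Notation cl := (clamp k).

Lemma div_le0 (v w : R) : v <= 0 -> 0 < w -> v / w <= 0.
Proof. by move=> h1 h2; rewrite ler_pdivrMr // mul0r. Qed.

Lemma Nr1 : 0 < Nr + 1.
Proof. have : 0 <= Nr by exact: ler0n. lra. Qed.

Lemma sym_NE (fc : R) (x : 'I_M -> R) :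
  spot_NE alpha beta c k (fun _ : 'I_N => fc) x (fun _ : 'I_N => cl ((a - d - \sum_i x i + fc)/(Nr+1))).
Proof.
apply: (NE_suff (C:=C)) => // [j|j z hz]; first exact: clamp_range.
set v := (a - d - \sum_i x i + fc)/(Nr+1).
have ev : v * (Nr + 1) = a - d - \sum_i x i + fc by rewrite /v divfK // lt0r_neq0 // Nr1.
rewrite /G sum_constR.
have -> : beta * (a - d - (\sum_i x i + Nr * cl v) - cl v + fc) = (beta * (Nr+1)) * (v - cl v).
  transitivity (beta * ((a - d - \sum_i x i + fc) - (Nr+1) * cl v)); first ring.
  rewrite -ev; ring.
have := clamp_prop v hz; have : 0 < beta * (Nr + 1) by rewrite mulr_gt0 // Nr1.
move=> h1 h2; nra.
Qed.

Lemma sum_upd0 j0 (t : R) : \sum_(i < N) upd (fun _ => 0) j0 t i = t.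
Proof. by rewrite sum_upd sum_constR mulr0 sub0r oppr0 add0r. Qed.

Lemma dev_NE (fc : R) (x : 'I_M -> R) j0 g :
  a - d - \sum_i x i + fc <= 0 ->
  spot_NE alpha beta c k (upd (fun _ : 'I_N => fc) j0 g) x
    (upd (fun _ => 0) j0 (cl ((a - d - \sum_i x i + g)/2))).
Proof.
move=> hK; set t := cl _.
have t0 : 0 <= t by exact: clamp_ge0.
apply: (NE_suff (C:=C)) => // [j|j z /andP[z0 zk]].
  rewrite /upd; case: ifP => _; [exact: clamp_range| apply/andP; split; [exact: lexx| exact: ltW hk]].
rewrite /G sum_upd0 /upd; case: ifP => hj.
  set v := (a - d - \sum_i x i + g)/2.
  have ev : v * 2 = a - d - \sum_i x i + g by rewrite /v; field.
  have -> : beta * (a - d - (\sum_i x i + t) - t + g) = (beta * 2) * (v - t).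
    transitivity (beta * ((a - d - \sum_i x i + g) - 2 * t)); first ring.
    rewrite -ev; ring.
  have h2 : (z - t) * (v - t) <= 0 by apply: clamp_prop; rewrite z0 zk.
  have : 0 < beta * 2 by rewrite mulr_gt0.
  move=> h1; nra.
rewrite subr0.
have : beta * (a - d - (\sum_i x i + t) - 0 + fc) <= 0.
  rewrite pmulr_rle0 //; lra.
move=> h; nra.
Qed.

Lemma sum_constM (xc : R) : \sum_(i < M) (fun _ => xc) i = Mr * xc.
Proof. exact: sum_constR. Qed.

Lemma price_c q : price alpha beta q - c = beta * (a - d - q).
Proof.
rewrite /price; have ea' := ea alpha C hb; have ec' := ec C c hb.
set A := alpha_x alpha beta C in ea' *; set D := dC beta C c in ec' *.
rewrite {1}ea' {1}ec'; ring.
Qed.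
Lemma price_C q : price alpha beta q - C = beta * (a - q).
Proof.
rewrite /price; have ea' := ea alpha C hb.
set A := alpha_x alpha beta C in ea' *.
rewrite {1}ea'; ring.
Qed.

Lemma yspot_sym fc (x : 'I_M -> R) j :
  yspot alpha beta c k (fun _ : 'I_N => fc) x j = cl ((a - d - \sum_i x i + fc)/(Nr+1)).
Proof. by rewrite (yspot_eq C hb (sym_NE fc x)). Qed.

Lemma sum_yspot_sym fc (x : 'I_M -> R) :
  \sum_j yspot alpha beta c k (fun _ : 'I_N => fc) x j = Nr * cl ((a - d - \sum_i x i + fc)/(Nr+1)).
Proof. by rewrite (eq_bigr _ (fun j _ => yspot_sym fc x j)) sum_constR. Qed.

Lemma yspot_sym0 fc xc j : a - d - Mr * xc + fc <= 0 ->
  yspot alpha beta c k (fun _ : 'I_N => fc) (fun _ : 'I_M => xc) j = 0.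
Proof.
move=> h; rewrite yspot_sym sum_constR clamp0 //.
by rewrite div_le0 // Nr1.
Qed.

Lemma yspot_sym0_iff (j0 : 'I_N) fc xc :
  (forall j, yspot alpha beta c k (fun _ : 'I_N => fc) (fun _ : 'I_M => xc) j = 0) <->
  a - d - Mr * xc + fc <= 0.
Proof.
split; last by move=> h j; exact: yspot_sym0.
move=> /(_ j0); rewrite yspot_sym sum_constR => h.
rewrite leNgt; apply/negP => hp.
have : 0 < cl ((a - d - Mr * xc + fc) / (Nr + 1)).
  by apply: clamp_pos => //; rewrite divr_gt0 // Nr1.
by rewrite h ltxx.
Qed.

Lemma fol_eq fc xc j : a - d - Mr * xc + fc <= 0 ->
  follower_payoff alpha beta c k (fun _ : 'I_N => fc) (fun _ : 'I_M => xc) j = 0.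
Proof. by move=> h; rewrite /follower_payoff yspot_sym0 // mulr0. Qed.

Lemma lead_eq fc xc i : a - d - Mr * xc + fc <= 0 ->
  leader_payoff alpha beta C c k (fun _ : 'I_N => fc) (fun _ : 'I_M => xc) i = beta * (a - Mr * xc) * xc.
Proof.
move=> h; rewrite /leader_payoff price_C /Defs.total sum_yspot_sym sum_constR.
rewrite clamp0 ?mulr0 ?addr0 ?mulrA //.
by rewrite div_le0 // Nr1.
Qed.

Lemma fol_dev fc xc j g : a - d - Mr * xc + fc <= 0 ->
  follower_payoff alpha beta c k (upd (fun _ : 'I_N => fc) j g) (fun _ : 'I_M => xc) j =
  beta * (a - d - Mr * xc - cl ((a - d - Mr * xc + g)/2)) * cl ((a - d - Mr * xc + g)/2).
Proof.
move=> h.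
have hK : a - d - \sum_(i < M) (fun _ => xc) i + fc <= 0 by rewrite sum_constR.
have E := yspot_eq C hb (dev_NE j g hK).
rewrite /follower_payoff /Defs.total (eq_bigr _ (fun j _ => E j)) E sum_upd0 price_c.
by rewrite /upd eqxx sum_constR; congr (_ * _); congr (_ * _); ring.
Qed.

Lemma lead_dev fc xc i z :
  leader_payoff alpha beta C c k (fun _ : 'I_N => fc) (upd (fun _ : 'I_M => xc) i z) i =
  beta * (a - (Mr * xc - xc + z) - Nr * cl ((a - d - (Mr * xc - xc + z) + fc)/(Nr+1))) * z.
Proof.
rewrite /leader_payoff price_C /Defs.total sum_yspot_sym !sum_upd sum_constR.
by rewrite /upd eqxx; congr (_ * _); congr (_ * _); ring.
Qed.

Definition LeadOK fc xc := forall z, 0 <= z ->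
  (a - (Mr * xc - xc + z) - Nr * cl ((a - d - (Mr * xc - xc + z) + fc)/(Nr+1))) * z
  <= (a - Mr * xc) * xc.

Lemma Q_nec (j0 : 'I_N) (i0 : 'I_M) fc xc :
  inQ M N alpha beta C c k fc xc -> a - d - Mr * xc + fc <= 0 ->
  a - d - Mr * xc <= 0 /\ LeadOK fc xc.
Proof.
move=> [x0 [_ [hF hL]]] hK; split.
  rewrite leNgt; apply/negP => hB.
  set B := a - d - Mr * xc in hB.
  set t := Num.min (B/2) k.
  have t0 : 0 < t by rewrite /t lt_min hk andbT divr_gt0.
  have t1 : t <= B/2 by rewrite /t ge_min lexx.
  have t2 : t <= k by rewrite /t ge_min lexx orbT.
  have := hF j0 (2 * t - B); rewrite fol_dev // fol_eq //.
  have -> : (a - d - Mr * xc + (2 * t - B)) / 2 = t by rewrite /B; field.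
  rewrite clamp_id ?t0 ?t2 // => h.
  have : 0 < beta * (B - t) * t by rewrite !mulr_gt0 //; lra.
  rewrite /B; lra.
move=> z z0; have := hL i0 z z0; rewrite lead_dev lead_eq //.
by rewrite -!mulrA ler_pM2l.
Qed.

Lemma Q_suf fc xc :
  0 <= xc -> a - d - Mr * xc + fc <= 0 -> a - d - Mr * xc <= 0 -> LeadOK fc xc ->
  inQ M N alpha beta C c k fc xc.
Proof.
move=> x0 hK hB hL; split => //; split => //; split.
  move=> j g; rewrite fol_dev // fol_eq //.
  set t := cl _; have t0 : 0 <= t by exact: clamp_ge0.
  have : 0 <= beta * (t - (a - d - Mr * xc)) * t by apply: mulr_ge0 => //; apply: mulr_ge0; [exact: ltW | lra].
  move=> h; have -> : beta * (a - d - Mr * xc - t) * t = - (beta * (t - (a - d - Mr * xc)) * t) by ring.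
  lra.
move=> i z z0; rewrite lead_dev lead_eq // -!mulrA ler_pM2l //.
exact: hL.
Qed.

End Game2.


Section Pure.
Variable R : realType.
Variables (a d Mr Nr k : R).
Hypotheses (hM : 1 <= Mr) (hN : 2 <= Nr) (hk : 0 < k) (hd : 0 < d).

Local Notation cl := (clamp k).

Definition LeadP fc xc := forall z, 0 <= z ->
  (a - (Mr * xc - xc + z) - Nr * cl ((a - d - (Mr * xc - xc + z) + fc)/(Nr+1))) * z
  <= (a - Mr * xc) * xc.

Lemma Nr1' : 0 < Nr + 1.
Proof. have h := hN; lra. Qed.

Lemma interior_ok : a <= (Mr + 1) * d ->
  exists fc xc, 0 <= xc /\ a - d - Mr * xc + fc <= 0 /\ a - d - Mr * xc <= 0 /\ LeadP fc xc.
Proof.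
have hM0 := hM; have hN0 := hN; have hk0 := hk; have hd0 := hd.
move=> had.
have hM1 : 0 < Mr + 1 by have h := hM; lra.
case: (leP 0 a) => ha.
- set xc := a / (Mr + 1).
  have ex : xc * (Mr + 1) = a by rewrite /xc divfK // lt0r_neq0.
  have x0 : 0 <= xc by rewrite /xc divr_ge0 // ltW.
  exists (Mr * xc - a + d - 1), xc; split => //; split; first lra.
  split; first by have h := hM; nra.
  move=> z z0; set y := cl _.
  have y0 : 0 <= y by exact: clamp_ge0.
  have : 0 <= Nr * y * z by have h := hN; apply: mulr_ge0 => //; apply: mulr_ge0 => //; lra.
  have : 0 <= (z - xc) ^+ 2 by exact: sqr_ge0.
  move=> h1 h2; nra.
- exists (- a + d - 1), 0; split => //; split; first lra.
  split; first lra.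
  move=> z z0; set y := cl _.
  have y0 : 0 <= y by exact: clamp_ge0.
  have : 0 <= Nr * y * z by have h := hN; apply: mulr_ge0 => //; apply: mulr_ge0 => //; lra.
  move=> h1; nra.
Qed.

Lemma K0 fc xc : (Mr + 1) * d < a -> 0 <= xc ->
  a - d - Mr * xc + fc <= 0 -> a - d - Mr * xc <= 0 -> LeadP fc xc ->
  a - d - Mr * xc + fc = 0.
Proof.
have hM0 := hM; have hN0 := hN; have hk0 := hk; have hd0 := hd.
move=> had x0 hK hB hL.
have ha : 0 < a by have h := hM; nra.
set p := a - Mr * xc + xc.
(* evaluating LeadP where followers are inactive *)
have Lz : forall z, 0 <= z -> a - d - Mr * xc + fc + xc <= z -> (p - z) * z <= (p - xc) * xc.
  move=> z z0 hz; have := hL z z0.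
  rewrite clamp0; last first.
    by apply: div_le0; [lra| exact: Nr1'].
  rewrite mulr0 subr0 /p.
  have -> : a - (Mr * xc - xc + z) = a - Mr * xc + xc - z by ring.
  have -> : a - Mr * xc + xc - xc = a - Mr * xc by ring.
  done.
have p2 : p <= 2 * xc.
  rewrite leNgt; apply/negP => hp.
  have := Lz (p / 2).
  have h1 : 0 <= p / 2 by lra.
  have h2 : a - d - Mr * xc + fc + xc <= p / 2 by lra.
  move=> /(_ h1 h2) h.
  have : 0 < (p / 2 - xc) ^+ 2 by rewrite exprn_gt0 //; lra.
  move=> h3; nra.
apply/eqP; rewrite eq_le hK /= leNgt; apply/negP => hKn.
have xpos : 0 < xc.
  rewrite lt0r x0 andbT; apply/negP => /eqP x00.
  by move: p2; rewrite /p x00 !mulr0 subr0 addr0; lra.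
have p2' : 2 * xc <= p.
  rewrite leNgt; apply/negP => hp.
  set z := Num.max (Num.max (a - d - Mr * xc + fc + xc) 0) (p / 2).
  have z1 : a - d - Mr * xc + fc + xc <= z by rewrite /z !le_max lexx.
  have z2 : 0 <= z by rewrite /z !le_max lexx orbT.
  have z3 : p / 2 <= z by rewrite /z le_max lexx orbT.
  have z4 : z < xc by rewrite /z !gt_max; apply/andP; split; [apply/andP; split|]; lra.
  have := Lz z z2 z1.
  have : 0 < (xc - z) * (xc + z - p) by apply: mulr_gt0; lra.
  move=> h1 h2; nra.
have ea : a = (Mr + 1) * xc by rewrite /p in p2 p2'; lra.
have : a - d <= Mr * xc by lra.
rewrite ea => h.
have : (Mr + 1) * xc <= (Mr + 1) * d by nra.
lra.
Qed.

Definition LB m x := forall z, 0 <= z ->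
  (m + x - z - Nr * cl ((x - z)/(Nr+1))) * z <= m * x.
Definition C2 m x := forall u, 0 <= u <= x -> (m - Nr * k + u) * (x - u) <= m * x.

Lemma bd_reform fc xc : Mr * xc = a - d + fc -> (LeadP fc xc <-> LB (d - fc) xc).
Proof.
have hM0 := hM; have hN0 := hN; have hk0 := hk; have hd0 := hd.
move=> e; split => h z z0; have := h z z0.
- have -> : a - (Mr * xc - xc + z) = d - fc + xc - z by lra.
  have -> : a - d - (Mr * xc - xc + z) + fc = xc - z by lra.
  have -> : a - Mr * xc = d - fc by lra.
  done.
- have -> : a - (Mr * xc - xc + z) = d - fc + xc - z by lra.
  have -> : a - d - (Mr * xc - xc + z) + fc = xc - z by lra.
  have -> : a - Mr * xc = d - fc by lra.
  done.
Qed.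

Lemma LB_nec m x : 0 < x -> LB m x -> [/\ m <= x, x <= (Nr + 1) * m & C2 m x].
Proof.
have hM0 := hM; have hN0 := hN; have hk0 := hk; have hd0 := hd.
move=> x0 hL.
have N1 := Nr1'.
split.
- rewrite leNgt; apply/negP => hm.
  have z0 : 0 <= (m + x) / 2 by lra.
  have := hL _ z0; rewrite clamp0; last by apply: div_le0 => //; lra.
  rewrite mulr0 subr0.
  have -> : m + x - (m + x) / 2 = (m + x) / 2 by field.
  have : 0 < ((m - x) / 2) ^+ 2 by rewrite exprn_gt0 //; lra.
  move=> h1 h2; nra.
- rewrite leNgt; apply/negP => hx.
  set u := Num.min x ((x - (Nr + 1) * m) / 2).
  have u0 : 0 < u by rewrite /u lt_min x0 /=; lra.
  have u1 : u <= x by rewrite /u ge_min lexx.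
  have u2 : u <= (x - (Nr + 1) * m) / 2 by rewrite /u ge_min lexx orbT.
  have z0 : 0 <= x - u by lra.
  have := hL _ z0.
  have -> : x - (x - u) = u by ring.
  have -> : m + x - (x - u) = m + u by ring.
  set w := u / (Nr + 1).
  have ew : w * (Nr + 1) = u by rewrite /w divfK // lt0r_neq0.
  have w0 : 0 < w by rewrite /w divr_gt0.
  have yw : cl w <= w by apply: clamp_le; lra.
  move=> h.
  have h2 : (m + u - Nr * w) * (x - u) <= (m + u - Nr * cl w) * (x - u).
    by apply: ler_wpM2r; [lra | have := hN; nra].
  have h3 : w * (x - (Nr + 1) * m - u) <= 0.
    have -> : w * (x - (Nr + 1) * m - u) = (m + u - Nr * w) * (x - u) - m * x.
      rewrite -ew; ring.
    lra.
  have : 0 < w * (x - (Nr + 1) * m - u) by apply: mulr_gt0; lra.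
  lra.
- move=> u /andP[u0 ux].
  have z0 : 0 <= x - u by lra.
  have := hL _ z0.
  have -> : x - (x - u) = u by ring.
  have -> : m + x - (x - u) = m + u by ring.
  have yk : cl (u / (Nr + 1)) <= k by exact: clamp_lek.
  move=> h.
  have : (m + u - Nr * k) * (x - u) <= (m + u - Nr * cl (u / (Nr + 1))) * (x - u).
    by apply: ler_wpM2r; [lra | have := hN; nra].
  lra.
Qed.

Lemma LB_suf m x : 0 <= m -> m <= x -> x <= (Nr + 1) * m -> C2 m x -> LB m x.
Proof.
have hM0 := hM; have hN0 := hN; have hk0 := hk; have hd0 := hd.
move=> m0 mx xm hC z z0.
have N1 := Nr1'.
case: (leP x z) => hz.
  rewrite clamp0; last by apply: div_le0 => //; lra.
  rewrite mulr0 subr0; nra.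
set u := x - z.
have u0 : 0 < u by rewrite /u; lra.
have -> : m + x - z = m + u by rewrite /u; ring.
have -> : z = x - u by rewrite /u; ring.
set w := u / (Nr + 1).
have ew : w * (Nr + 1) = u by rewrite /w divfK // lt0r_neq0.
have w0 : 0 < w by rewrite /w divr_gt0.
case: (leP w k) => hw.
  rewrite clamp_id; last by rewrite w0 hw.
  have -> : (m + u - Nr * w) * (x - u) = m * x + w * (x - (Nr + 1) * m - u).
    rewrite -ew; ring.
  have : w * (x - (Nr + 1) * m - u) <= 0.
    by rewrite pmulr_rle0 //; lra.
  lra.
have -> : cl w = k by rewrite /clamp; case: (leP w 0) => h1; [lra| case: (leP w k) => h2 //; lra].
have hu : 0 <= u <= x by apply/andP; split; rewrite /u; lra.
have h := hC u hu.
have -> : m + u - Nr * k = m - Nr * k + u by ring.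
done.
Qed.

End Pure.


Lemma sq_le (R : realType) (x y : R) : 0 <= y -> x ^+ 2 <= y ^+ 2 -> x <= y.
Proof.
move=> y0 h; rewrite leNgt; apply/negP => hxy.
have : y ^+ 2 < x ^+ 2 by rewrite !expr2; nra.
lra.
Qed.
Lemma sq_lt (R : realType) (x y : R) : 0 <= y -> x ^+ 2 < y ^+ 2 -> x < y.
Proof.
move=> y0 h; rewrite ltNge; apply/negP => hxy.
have : y ^+ 2 <= x ^+ 2 by rewrite !expr2; nra.
lra.
Qed.

Section Pure2.
Variable R : realType.
Variables (a d Mr Nr k : R).
Hypotheses (hM : 1 <= Mr) (hN : 2 <= Nr) (hk : 0 < k) (hd : 0 < d).

Local Notation s := (Num.sqrt (Nr * k)).

Lemma s_facts : 0 < s /\ s ^+ 2 = Nr * k.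
Proof.
have hM0 := hM; have hN0 := hN; have hk0 := hk.
have hNk : 0 < Nr * k by apply: mulr_gt0; lra.
by split; [rewrite sqrtr_gt0 | rewrite sqr_sqrtr // ltW].
Qed.

Lemma C2_iff m x : 0 <= m -> 0 <= x ->
  (C2 Nr k m x <-> x <= (Num.sqrt m + s) ^+ 2).
Proof.
move=> m0 x0.
have [s0 hs] := s_facts.
move: s0 hs; set S := Num.sqrt (Nr * k) => s0 hs.
set X := Num.sqrt x; set T := Num.sqrt m.
have hX : X ^+ 2 = x by rewrite sqr_sqrtr.
have hT : T ^+ 2 = m by rewrite sqr_sqrtr.
have X0 : 0 <= X by exact: sqrtr_ge0.
have T0 : 0 <= T by exact: sqrtr_ge0.
rewrite /C2 -hX -hT -hs.
split.
- move=> hC; rewrite leNgt; apply/negP => hx.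
  have hXT : T + S < X by apply: sq_lt => //; lra.
  have u0 : 0 <= S * X <= X ^+ 2.
    by apply/andP; split; [apply: mulr_ge0; lra | rewrite expr2; apply: ler_wpM2r => //; lra].
  have := hC _ u0.
  move=> h.
  have : 0 < S * X * ((X - S) ^+ 2 - T ^+ 2).
    apply: mulr_gt0; first (apply: mulr_gt0; lra).
    nra.
  move: h; rewrite -subr_le0.
  have -> : (T ^+ 2 - S ^+ 2 + S * X) * (X ^+ 2 - S * X) - T ^+ 2 * X ^+ 2
            = S * X * ((X - S) ^+ 2 - T ^+ 2) by ring.
  lra.
- move=> hx u /andP[u0 ux].
  have hXT : X <= T + S by apply: sq_le => //; lra.
  case: (leP ((X - S) ^+ 2) (T ^+ 2)) => hc.
    have E : T ^+ 2 * X ^+ 2 - (T ^+ 2 - S ^+ 2 + u) * (X ^+ 2 - u)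
             = (u - S * X) ^+ 2 + u * (T ^+ 2 - (X - S) ^+ 2) by ring.
    have : 0 <= (u - S * X) ^+ 2 + u * (T ^+ 2 - (X - S) ^+ 2).
      apply: addr_ge0; first exact: sqr_ge0.
      apply: mulr_ge0 => //; lra.
    rewrite -E subr_ge0 //.
  have hs2 : X + T < S by nra.
  have : T ^+ 2 - S ^+ 2 + u < 0 by nra.
  move=> h; have : 0 <= X ^+ 2 - u by lra.
  move=> h2; have : 0 <= T ^+ 2 * X ^+ 2 by apply: mulr_ge0; exact: sqr_ge0.
  nra.
Qed.

Definition f1 := ((Nr + 1) * Mr * d + d - a) / (Mr * (Nr + 1) + 1).
Definition Dd := (Mr + 1) * a - Mr * s ^+ 2.
Definition tst := (Num.sqrt Dd - Mr * s) / (Mr + 1).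
Definition t0 := Num.max 0 tst.
Definition fbar := Num.min f1 (d - t0 ^+ 2).

Lemma h_key t : 0 <= Dd ->
  t ^+ 2 + Mr * (t + s) ^+ 2 - a
  = (t - tst) * ((Mr + 1) * t + Num.sqrt Dd + Mr * s).
Proof.
move=> D0.
have hM0 := hM.
have q0 : Mr + 1 != 0 by apply: lt0r_neq0; lra.
set r := Num.sqrt Dd.
have hr : r ^+ 2 = Dd by rewrite sqr_sqrtr.
apply: (mulfI q0).
have -> : (Mr + 1) * ((t - tst) * ((Mr + 1) * t + r + Mr * s))
         = ((Mr + 1) * t - (r - Mr * s)) * ((Mr + 1) * t + r + Mr * s).
  by rewrite /tst -/r; field.
have key : ((Mr + 1) * t - (r - Mr * s)) * ((Mr + 1) * t + r + Mr * s)
          = (Mr + 1) * (t ^+ 2 + Mr * (t + s) ^+ 2 - a) + (Dd - r ^+ 2).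
  rewrite /Dd; ring.
by rewrite key hr subrr addr0.
Qed.

Lemma h_iff t : 0 < a -> 0 <= t -> (a <= t ^+ 2 + Mr * (t + s) ^+ 2 <-> t0 <= t).
Proof.
move=> a0 t0'.
have hM0 := hM.
have [s0 hs] := s_facts.
rewrite /t0 ge_max t0' /=.
case: (leP 0 Dd) => D0.
  have W0 : 0 < (Mr + 1) * t + Num.sqrt Dd + Mr * s.
    have := sqrtr_ge0 Dd; have : 0 < Mr * s by apply: mulr_gt0; lra.
    move=> h1 h2; nra.
  rewrite -subr_ge0 h_key //.
  split => h.
    by move: h; rewrite pmulr_lge0 // subr_ge0.
  by rewrite pmulr_lge0 // subr_ge0.
have htst : tst <= 0.
  rewrite /tst ltr0_sqrtr // sub0r; apply: div_le0; last lra.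
  have : 0 < Mr * s by apply: mulr_gt0; lra.
  lra.
have -> : tst <= t by apply: le_trans htst t0'.
split => // _.
move: D0; rewrite /Dd => D0.
have : 0 <= t ^+ 2 by exact: sqr_ge0.
have : s ^+ 2 <= (t + s) ^+ 2 by nra.
have : 0 < s ^+ 2 by rewrite exprn_gt0.
move=> h1 h2 h3; nra.
Qed.


Lemma tst_lt t : 0 < a -> 0 <= t -> a < t ^+ 2 + Mr * (t + s) ^+ 2 -> tst < t.
Proof.
move=> a0 t0' h.
have hM0 := hM.
have [s0 hs] := s_facts.
case: (leP 0 Dd) => D0.
  have W0 : 0 < (Mr + 1) * t + Num.sqrt Dd + Mr * s.
    have := sqrtr_ge0 Dd; have : 0 < Mr * s by apply: mulr_gt0; lra.
    move=> h1 h2; nra.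
  move: h; rewrite -subr_gt0 h_key // pmulr_lgt0 // subr_gt0 //.
have : tst < 0.
  rewrite /tst ltr0_sqrtr // sub0r; rewrite ltr_pdivrMr; last lra.
  have : 0 < Mr * s by apply: mulr_gt0; lra.
  lra.
lra.
Qed.

Lemma t0_ge0 : 0 <= t0.
Proof. by rewrite /t0 le_max lexx. Qed.

Lemma fbar2_pos : 0 < a -> a < d + Mr * (Num.sqrt d + s) ^+ 2 -> 0 < d - t0 ^+ 2.
Proof.
move=> a0 h.
have hd0 := hd.
set q := Num.sqrt d.
have q0 : 0 < q by rewrite sqrtr_gt0.
have hq : q ^+ 2 = d by rewrite sqr_sqrtr // ltW.
have : t0 < q.
  rewrite /t0 gt_max q0 /=; apply: tst_lt => //; first lra.
  by rewrite hq.
have := t0_ge0 => h1 h2.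
have : t0 ^+ 2 < q ^+ 2 by rewrite !expr2; nra.
lra.
Qed.

Lemma good_iff f : (Mr + 1) * d < a -> 0 <= f ->
  ((a - d + f) / Mr <= (Nr + 1) * (d - f) /\ (a - d + f) / Mr <= (Num.sqrt (d - f) + s) ^+ 2)
  <-> f <= fbar.
Proof.
move=> had f0.
have hM0 := hM; have hN0 := hN; have hd0 := hd.
have a0 : 0 < a by nra.
have Mr0 : 0 < Mr by lra.
have q1 : 0 < Mr * (Nr + 1) by apply: mulr_gt0; lra.
have q0 : 0 < Mr * (Nr + 1) + 1 by lra.
have e1 : ((a - d + f) / Mr <= (Nr + 1) * (d - f)) = (f <= f1).
  rewrite /f1 ler_pdivrMr // ler_pdivlMr //.
  apply/idP/idP => h; nra.
rewrite /fbar le_min e1.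
split.
  move=> [h1 h2]; rewrite h1 /=.
  have dfp : 0 < d - f.
    have : 0 < (a - d + f) / Mr by rewrite divr_gt0 //; nra.
    move: h1; rewrite -e1 => h1'; nra.
  set t := Num.sqrt (d - f).
  have ht : t ^+ 2 = d - f by rewrite sqr_sqrtr // ltW.
  have tt0 : 0 <= t by exact: sqrtr_ge0.
  have : a <= t ^+ 2 + Mr * (t + s) ^+ 2.
    move: h2; rewrite ler_pdivrMr // -/t mulrC => h2.
    lra.
  rewrite h_iff // => h3.
  have := t0_ge0 => h4.
  have : t0 ^+ 2 <= t ^+ 2 by rewrite !expr2; nra.
  lra.
move=> /andP[h1 h2]; split; first by [].
have := t0_ge0 => h4.
have t02 : 0 <= t0 ^+ 2 by exact: sqr_ge0.
have dfp : 0 <= d - f by lra.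
set t := Num.sqrt (d - f).
have ht : t ^+ 2 = d - f by rewrite sqr_sqrtr.
have tt0 : 0 <= t by exact: sqrtr_ge0.
have : t0 <= t by apply: sq_le => //; lra.
rewrite -h_iff // => h3.
rewrite ler_pdivrMr //; lra.
Qed.

End Pure2.


Section Main.
Variable R : realType.
Variables (M N : nat) (alpha beta C c k : R).

Local Notation a := (alpha_x alpha beta C).
Local Notation d := (dC beta C c).
Local Notation Mr := (M%:R : R).
Local Notation Nr := (N%:R : R).
Local Notation s := (Num.sqrt (Nr * k)).

Definition good f := (a - d + f) / Mr <= (Nr + 1) * (d - f) /\
                     (a - d + f) / Mr <= (Num.sqrt (d - f) + s) ^+ 2.

Lemma P_nec (hM : (1 <= M)%N) (hN : (2 <= N)%N) (hb : 0 < beta) (hk : 0 < k) (hd : 0 < d) f x :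
  inQ M N alpha beta C c k f x ->
  (forall j, yspot alpha beta c k (fun _ : 'I_N => f) (fun _ : 'I_M => x) j = 0) ->
  a <= (Mr + 1) * d \/ (Mr * x = a - d + f /\ 0 <= f /\ good f).
Proof.
move=> hQ hy.
have hM' : 1 <= Mr by rewrite ler1n.
have hN' : 2 <= Nr by rewrite ler_nat.
have j0 : 'I_N by exists 0%N; apply: leq_trans hN.
have i0 : 'I_M by exists 0%N.
have hK : a - d - Mr * x + f <= 0 by apply/(yspot_sym0_iff M alpha C c hb hk j0 f x).
have [hB hL] := Q_nec hb hk j0 i0 hQ hK.
case: (leP a ((Mr + 1) * d)) => had; [by left | right].
have x0 : 0 <= x by case: hQ.
have hK0 := K0 hM' hN' hk hd had x0 hK hB hL.
have ex : Mr * x = a - d + f by lra.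
have f0 : 0 <= f by lra.
split => //; split => //.
have hLB := (bd_reform hM' hN' hk hd ex).1 hL.
have xpos : 0 < x.
  have : 0 < Mr * x by nra.
  rewrite pmulr_rgt0 //; lra.
have [h1 h2 h3] := LB_nec hM' hN' hk hd xpos hLB.
have m0 : 0 <= d - f by nra.
have exx : (a - d + f) / Mr = x by rewrite -ex mulrAC divff ?mul1r // lt0r_neq0 //; lra.
rewrite /good exx; split => //.
by apply/(C2_iff hM' hN' hk m0 (ltW xpos)).
Qed.

Lemma P_suf (hM : (1 <= M)%N) (hN : (2 <= N)%N) (hb : 0 < beta) (hk : 0 < k) (hd : 0 < d) f :
  (Mr + 1) * d < a -> 0 <= f -> good f ->
  inQ M N alpha beta C c k f ((a - d + f) / Mr) /\
  (forall j, yspot alpha beta c k (fun _ : 'I_N => f) (fun _ : 'I_M => (a - d + f) / Mr) j = 0).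
Proof.
move=> had f0 [g1 g2].
have hM' : 1 <= Mr by rewrite ler1n.
have hN' : 2 <= Nr by rewrite ler_nat.
have Mr0 : 0 < Mr by lra.
set x := (a - d + f) / Mr in g1 g2 *.
have ex : Mr * x = a - d + f by rewrite /x mulrC (divfK (lt0r_neq0 Mr0)).
have xpos : 0 < x by rewrite /x divr_gt0 //; nra.
have hK : a - d - Mr * x + f <= 0 by lra.
split; last by move=> j; exact: (yspot_sym0 hb hk j hK).
have m0 : 0 <= d - f by nra.
have mx : d - f <= x.
  have : Mr * (d - f) <= Mr * x by rewrite ex; nra.
  by rewrite ler_pM2l.
have hC2 := (C2_iff hM' hN' hk m0 (ltW xpos)).2 g2.
have hLB := LB_suf hM' hN' hk hd m0 mx g1 hC2.
have hL := (bd_reform hM' hN' hk hd ex).2 hLB.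
apply: (Q_suf hb hk) => //; [exact: ltW | lra].
Qed.

Lemma zeta_eq : zeta1 M N beta C c k =
  (Mr + 1) * d + Num.min (Mr * Nr * d) (Mr * Nr * k + 2 * Mr * Num.sqrt (Nr * k * d)).
Proof. by []. Qed.

Lemma zeta_le (hM : (1 <= M)%N) (hN : (2 <= N)%N) (hk : 0 < k) (hd : 0 < d) :
  a <= zeta1 M N beta C c k <->
  ((a - d) / Mr <= (Nr + 1) * d /\ (a - d) / Mr <= (Num.sqrt d + s) ^+ 2).
Proof.
have hM' : 1 <= Mr by rewrite ler1n.
have hN' : 2 <= Nr by rewrite ler_nat.
have Mr0 : 0 < Mr by lra.
have hNk : 0 <= Nr * k by apply: mulr_ge0; lra.
have hs : s ^+ 2 = Nr * k by rewrite sqr_sqrtr.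
rewrite zeta_eq sqrtrM // !(ler_pdivrMr _ _ Mr0).
rewrite -lerBlDl le_min.
have E : (Num.sqrt d + s) ^+ 2 * Mr = Mr * d + Mr * Nr * k + 2 * Mr * (s * Num.sqrt d).
  have E0 : (Num.sqrt d + s) ^+ 2 * Mr = Mr * d + Mr * s ^+ 2 + 2 * Mr * (s * Num.sqrt d).
    have hd2 : Num.sqrt d ^+ 2 = d by rewrite sqr_sqrtr // ltW.
    rewrite -{2}hd2; ring.
  by rewrite E0 hs mulrA.
rewrite E.
split.
  by move=> /andP[h1 h2]; split; lra.
by move=> [h1 h2]; apply/andP; split; lra.
Qed.

Lemma zeta_lt (hM : (1 <= M)%N) (hN : (2 <= N)%N) (hk : 0 < k) (hd : 0 < d) :
  a < zeta1 M N beta C c k ->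
  (a < (Mr + 1) * d + Mr * Nr * d /\ a < d + Mr * (Num.sqrt d + s) ^+ 2).
Proof.
have hM' : 1 <= Mr by rewrite ler1n.
have hN' : 2 <= Nr by rewrite ler_nat.
have hNk : 0 <= Nr * k by apply: mulr_ge0; lra.
have hs : s ^+ 2 = Nr * k by rewrite sqr_sqrtr.
rewrite zeta_eq sqrtrM // -ltrBlDl lt_min => /andP[h1 h2].
have E : Mr * (Num.sqrt d + s) ^+ 2 = Mr * d + Mr * Nr * k + 2 * Mr * (s * Num.sqrt d).
  have E0 : Mr * (Num.sqrt d + s) ^+ 2 = Mr * d + Mr * s ^+ 2 + 2 * Mr * (s * Num.sqrt d).
    have hd2 : Num.sqrt d ^+ 2 = d by rewrite sqr_sqrtr // ltW.
    rewrite -{2}hd2; ring.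
  by rewrite E0 hs mulrA.
rewrite E; split; lra.
Qed.

Lemma main (hM : (1 <= M)%N) (hN : (2 <= N)%N) (hb : 0 < beta) (hk : 0 < k) (hd : 0 < d) :
  ((exists f x : R, inQ M N alpha beta C c k f x /\
      (forall j, @yspot R M N alpha beta c k (fun _ => f) (fun _ => x) j = 0))
    <-> a <= zeta1 M N beta C c k) /\
  ((Mr + 1) * d < a ->
   exists fbar : R,
     (forall f x : R, inQ M N alpha beta C c k f x ->
        ((forall j, @yspot R M N alpha beta c k (fun _ => f) (fun _ => x) j = 0) <->
         (0 <= x /\ x = (a - (d - f)) / Mr /\ 0 <= f <= fbar))) /\
     (forall f x : R, 0 <= x ->
        x = (a - (d - f)) / Mr -> 0 <= f <= fbar ->
        inQ M N alpha beta C c k f x) /\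
     (a < zeta1 M N beta C c k -> 0 < fbar)).
Proof.
have hM' : 1 <= Mr by rewrite ler1n.
have hN' : 2 <= Nr by rewrite ler_nat.
have Mr0 : 0 < Mr by lra.
have hzl := zeta_le hM hN hk hd.
split.
  split.
    move=> [f [x [hQ hy]]].
    case: (P_nec hM hN hb hk hd hQ hy) => [had|[ex [f0 [g1 g2]]]].
      apply: le_trans had _; rewrite zeta_eq lerDl le_min.
      apply/andP; split.
        by apply: mulr_ge0; [apply: mulr_ge0|]; lra.
      apply: addr_ge0; first by apply: mulr_ge0; [apply: mulr_ge0|]; lra.
      by apply: mulr_ge0; [apply: mulr_ge0|exact: sqrtr_ge0]; lra.
    apply/hzl.
    have h0 : (a - d) / Mr <= (a - d + f) / Mr by rewrite ler_pM2r ?invr_gt0 //; lra.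
    split; first by nra.
    have hsq : Num.sqrt (d - f) <= Num.sqrt d by rewrite ler_sqrt //; lra.
    have : (Num.sqrt (d - f) + s) ^+ 2 <= (Num.sqrt d + s) ^+ 2.
      have := sqrtr_ge0 (d - f); have := sqrtr_ge0 (Nr * k).
      move=> h1 h2; rewrite !expr2; nra.
    lra.
  move=> hz.
  case: (leP a ((Mr + 1) * d)) => had.
    have [fc [xc [x0 [hK [hB hL]]]]] := interior_ok hM' hN' hk hd had.
    exists fc, xc; split.
      exact: (Q_suf hb hk x0 hK hB hL).
    by move=> j; exact: (yspot_sym0 hb hk j hK).
  have [h1 h2] := hzl.1 hz.
  have g0 : good 0.
    by rewrite /good addr0 subr0.
  have [hQ hy] := P_suf hM hN hb hk hd had (lexx 0) g0.
  by exists 0, ((a - d + 0) / Mr).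
move=> had.
have a0 : 0 < a by nra.
exists (fbar a d Mr Nr k).
split.
  move=> f x hQ; split.
    move=> hy.
    case: (P_nec hM hN hb hk hd hQ hy) => [h|[ex [f0 g]]]; first lra.
    have x0 : 0 <= x by case: hQ.
    split => //; split.
      have -> : a - (d - f) = Mr * x by rewrite ex; ring.
      by rewrite mulrAC divff ?mul1r // lt0r_neq0.
    by rewrite f0 /=; apply/(good_iff hM' hN' hk hd had f0).
  move=> [x0 [ex /andP[f0 fb]]] j; apply: (yspot_sym0 hb hk) => //.
  have : Mr * x = a - d + f by rewrite ex mulrC divfK ?lt0r_neq0 //; ring.
  lra.
split.
  move=> f x x0 ex /andP[f0 fb].
  have g := (good_iff hM' hN' hk hd had f0).2 fb.
  have [hQ _] := P_suf hM hN hb hk hd had f0 g.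
  have -> : x = (a - d + f) / Mr by rewrite ex; congr (_ / _); ring.
  exact: hQ.
move=> hz.
have [h1 h2] := zeta_lt hM hN hk hd hz.
rewrite /fbar lt_min; apply/andP; split.
  rewrite /f1 divr_gt0 //; first by nra.
  have : 0 < Mr * (Nr + 1) by apply: mulr_gt0; lra.
  lra.
exact: fbar2_pos.
Qed.

End Main.


Theorem lemma5 (R : realType) (M N : nat) (alpha beta C c k : R) :
  (1 <= M)%N -> (2 <= N)%N ->
  0 < alpha -> 0 < beta -> 0 < C -> C <= c -> 0 < k ->
  0 < dC beta C c ->
  ((exists f x : R, inQ M N alpha beta C c k f x /\
      (forall j, @yspot R M N alpha beta c k (fun _ => f) (fun _ => x) j = 0))
    <-> alpha_x alpha beta C <= zeta1 M N beta C c k) /\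
  ((M%:R + 1) * dC beta C c < alpha_x alpha beta C ->
   exists fbar : R,
     (forall f x : R, inQ M N alpha beta C c k f x ->
        ((forall j, @yspot R M N alpha beta c k (fun _ => f) (fun _ => x) j = 0) <->
         (0 <= x /\ x = (alpha_x alpha beta C - (dC beta C c - f)) / M%:R /\
          0 <= f <= fbar))) /\
     (forall f x : R, 0 <= x ->
        x = (alpha_x alpha beta C - (dC beta C c - f)) / M%:R -> 0 <= f <= fbar ->
        inQ M N alpha beta C c k f x) /\
     (alpha_x alpha beta C < zeta1 M N beta C c k -> 0 < fbar)).
Proof.
move=> hM hN _ hb _ _ hk hd.
exact: (@main R M N alpha beta C c k hM hN hb hk hd).
Qed.
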